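(* Every $GF(2)$-chordal matroid is a chordal matroid.
   Context: All matroids are simple. For matroids $M_1,M_2$ whose ground sets meet in a set $T$ that is a modular flat of $M_1$ with $M_1|T=M_2|T=N$, the generalized parallel connection $P_N(M_1,M_2)$ is the matroid on $E(M_1)\cup E(M_2)$ whose flats are the sets $Z$ with $Z\cap E(M_i)$ a flat of $M_i$ for $i=1,2$ (if $T=\emptyset$ this is $M_1\oplus M_2$). A matroid is $GF(2)$-chordal if it can be built from binary projective geometries by a sequence of generalized parallel connections across binary projective geometries. A matroid $M$ is chordal if, for each circuit $C$ of $M$ with at least four elements, there are circuits $C_1$ and $C_2$ and an element $e$ such that $C_1\cap C_2=\{e\}$ and $C=(C_1\cup C_2)-e$. *)

(* Defs.v *)
From HB Require Import structures.
From mathcomp Require Import all_boot all_order all_algebra.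
Set Implicit Arguments. Unset Strict Implicit. Unset Printing Implicit Defensive.
Import GRing.Theory.

Section Matroids.
Variable T : finType.

Record matroid := Matroid {
  ground : {set T};
  indep : {set T} -> bool;
  indep0 : indep set0;
  indep_sub : forall X, indep X -> X \subset ground;
  indep_hered : forall X Y : {set T}, Y \subset X -> indep X -> indep Y;
  indep_aug : forall X Y : {set T}, indep X -> indep Y -> #|X| < #|Y| ->
                exists2 y, y \in Y :\: X & indep (y |: X)
}.

Variable M : matroid.

Definition rk (X : {set T}) : nat :=
  \max_(Y : {set T} | (Y \subset X) && indep M Y) #|Y|.

Definition flat (X : {set T}) : bool :=
  (X \subset ground M) &&
  [forall e in ground M :\: X, rk X < rk (e |: X)].

Definition circuit (C : {set T}) : bool :=
  [&& C \subset ground M, ~~ indep M C & [forall e in C, indep M (C :\ e)]].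

Definition modular_flat (F : {set T}) : Prop :=
  flat F /\ forall X : {set T}, flat X -> rk F + rk X = rk (F :|: X) + rk (F :&: X).

Definition simple_matroid : Prop :=
  forall X : {set T}, X \subset ground M -> #|X| <= 2 -> indep M X.

(* the restriction M|S is isomorphic to the binary projective geometry
   PG(r-1,2) for some r (r = 0 gives the empty matroid): there is a bijection
   from S onto the nonzero vectors of GF(2)^r under which the independent
   subsets of S are exactly those sent to linearly independent vectors. *)
Definition rows_of (r : nat) (f : T -> 'rV['F_2]_r) (X : {set T}) :
  'M['F_2]_(#|X|, r) := \matrix_(i < #|X|) f (enum_val (A := X) i).

Definition binary_pg_on (S : {set T}) : Prop :=
  exists (r : nat) (f : T -> 'rV['F_2]_r),
    [/\ {in S &, injective f},
        f @: S = [set v : 'rV['F_2]_r | v != 0%R] &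
        forall X : {set T}, X \subset S -> indep M X = row_free (rows_of f X)].

Definition binary_pg : Prop := binary_pg_on (ground M).

Definition chordal : Prop :=
  forall C : {set T}, circuit C -> 4 <= #|C| ->
    exists (C1 C2 : {set T}) (e : T), [/\ circuit C1, circuit C2, C1 :&: C2 = [set e] &
                        C = (C1 :|: C2) :\ e].

End Matroids.

(* M is the generalized parallel connection P_N(M1,M2), where
   T = E(M1) ∩ E(M2) is a modular flat of M1, M1|T = M2|T (= N), and the flats
   of M are the subsets Z of E(M1) ∪ E(M2) with Z ∩ E(Mi) a flat of Mi. *)
Definition is_gpc (T : finType) (M1 M2 M : matroid T) : Prop :=
  let S := ground M1 :&: ground M2 in
  [/\ ground M = ground M1 :|: ground M2,
      modular_flat M1 S,
      (forall X : {set T}, X \subset S -> indep M1 X = indep M2 X) &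
      (forall Z : {set T}, flat M Z <->
         [/\ Z \subset ground M, flat M1 (Z :&: ground M1)
           & flat M2 (Z :&: ground M2)])].

Definition is_gpc_pg (T : finType) (M1 M2 M : matroid T) : Prop :=
  is_gpc M1 M2 M /\ binary_pg_on M1 (ground M1 :&: ground M2).

Inductive gf2_chordal (T : finType) : matroid T -> Prop :=
| gf2c_pg M : binary_pg M -> gf2_chordal M
| gf2c_gpc M1 M2 M : gf2_chordal M1 -> gf2_chordal M2 ->
    is_gpc_pg M1 M2 M -> gf2_chordal M.

(* Main.v *)
Require Import Defs.
From mathcomp Require Import all_boot all_order all_algebra.
From mathcomp Require Import zify.
Set Implicit Arguments. Unset Strict Implicit. Unset Printing Implicit Defensive.

Ltac slia := repeat (match goal with H : _ |- _ => clear H end); lia.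

Section Basics.
Variable T : finType.
Variable M : matroid T.
Local Notation E := (ground M).
Local Notation ind := (indep M).
Local Notation rk := (rk M).
Implicit Types X Y Z A B C D I L S W : {set T}.

Lemma setU1_id (x : T) A : x \in A -> x |: A = A.
Proof. by move=> h; apply/setUidPr; rewrite sub1set. Qed.

Lemma rk_max X Y : Y \subset X -> ind Y -> #|Y| <= rk X.
Proof.
move=> sYX iY; rewrite /rk.
by apply: (leq_bigmax_cond (F := fun Y : {set T} => #|Y|)); rewrite sYX iY.
Qed.

Lemma rk_basis X : exists2 Y : {set T}, (Y \subset X) && ind Y & #|Y| = rk X.
Proof.
have H : 0 < #|[pred Y : {set T} | (Y \subset X) && ind Y]|.
  by apply/card_gt0P; exists set0; rewrite inE sub0set indep0.
case: (eq_bigmax_cond (fun Y : {set T} => #|Y|) H) => Y HY E'.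
exists Y; first exact HY.
exact: (esym E').
Qed.

Lemma rk_le_card X : rk X <= #|X|.
Proof. by apply/bigmax_leqP => Y /andP[sYX _]; exact: subset_leq_card. Qed.

Lemma rk_mono X Y : X \subset Y -> rk X <= rk Y.
Proof.
move=> sXY; apply/bigmax_leqP => Z /andP[sZX iZ].
by apply: rk_max => //; exact: subset_trans sZX sXY.
Qed.

Lemma rk_indep X : ind X -> rk X = #|X|.
Proof. by move=> iX; apply/eqP; rewrite eqn_leq rk_le_card rk_max. Qed.

Lemma indep_rk X : rk X = #|X| -> ind X.
Proof.
move=> e; case: (rk_basis X) => Y /andP[sYX iY] eY.
have: Y = X.
  apply/setP; apply/subset_cardP => //; by rewrite eY e.
by move=> <-.
Qed.

Lemma indep_rkE X : ind X = (rk X == #|X|).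
Proof.
apply/idP/eqP; [exact: rk_indep | exact: indep_rk].
Qed.

Lemma rk_extend I X : I \subset X -> ind I ->
  exists B : {set T}, [/\ I \subset B, B \subset X, ind B & #|B| = rk X].
Proof.
move=> sIX iI.
pose P := fun B : {set T} => [&& I \subset B, B \subset X & ind B].
have PI : P I by rewrite /P subxx sIX iI.
case: (@arg_maxnP _ I P (fun B => #|B|) PI) => B /and3P[sIB sBX iB] Hmax.
exists B; split => //.
apply/eqP; rewrite eqn_leq (rk_max sBX iB) /= leqNgt; apply/negP => lt.
case: (rk_basis X) => Y /andP[sYX iY] eY.
have : #|B| < #|Y| by rewrite eY.
case/(indep_aug iB iY) => y /setDP[yY ynB] iyB.
have : P (y |: B).
  rewrite /P iyB andbT (subset_trans sIB (subsetUr _ _)) /=.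
  by rewrite subUset sub1set (subsetP sYX) // sBX.
move/Hmax; rewrite cardsU1 ynB /=; lia.
Qed.

Lemma rk_submod A B : rk (A :|: B) + rk (A :&: B) <= rk A + rk B.
Proof.
case: (rk_extend (sub0set (A :&: B)) (indep0 M)) => B0 [_ sB0 iB0 eB0].
have sIU : A :&: B \subset A :|: B := subset_trans (subsetIl A B) (subsetUl A B).
case: (rk_extend (subset_trans sB0 sIU) iB0) => B1 [s01 s1 i1 e1].
rewrite -e1 -eB0.
have h1 : #|B1 :&: A| <= rk A := rk_max (subsetIr _ _) (indep_hered (subsetIl _ _) i1).
have h2 : #|B1 :&: B| <= rk B := rk_max (subsetIr _ _) (indep_hered (subsetIl _ _) i1).
apply: leq_trans (leq_add h1 h2).
rewrite -[#|B1 :&: A| + _]cardsUI -setIUr (setIidPl s1) leq_add2l; apply: subset_leq_card.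
by rewrite setIACA setIid subsetI s01 sB0.
Qed.

Lemma rk_U A B : rk (A :|: B) <= rk A + rk B.
Proof. exact: leq_trans (leq_addr _ _) (rk_submod A B). Qed.

Lemma rk_set1 e : rk [set e] <= 1.
Proof. by rewrite -(cards1 e) rk_le_card. Qed.

Lemma rk_U1 e X : rk (e |: X) <= (rk X).+1.
Proof. by rewrite -add1n; apply: leq_trans (rk_U _ _) _; rewrite leq_add2r rk_set1. Qed.

Lemma rk_U1_ge e X : rk X <= rk (e |: X).
Proof. exact/rk_mono/subsetUr. Qed.

Definition cl X := [set e in E | rk (e |: X) <= rk X].

Lemma clE e X : (e \in cl X) = (e \in E) && (rk (e |: X) <= rk X).
Proof. by rewrite inE. Qed.

Lemma cl_ground X : cl X \subset E.
Proof. by apply/subsetP => e; rewrite clE => /andP[]. Qed.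

Lemma cl_sub X : X \subset E -> X \subset cl X.
Proof.
move=> sX; apply/subsetP => e eX; by rewrite clE (subsetP sX e eX) setU1_id // leqnn.
Qed.

Lemma cl_mono_el x X Y : x \in cl X -> X \subset Y -> rk (x |: Y) <= rk Y.
Proof.
rewrite clE => /andP[_ h] sXY.
have := rk_submod (x |: X) Y.
have -> : (x |: X) :|: Y = x |: Y by rewrite -setUA (setUidPr sXY).
have : rk X <= rk ((x |: X) :&: Y).
  by apply: rk_mono; rewrite subsetI subsetUr sXY.
lia.
Qed.

Lemma clS X Y : X \subset Y -> cl X \subset cl Y.
Proof.
move=> sXY; apply/subsetP => x xc; rewrite clE (cl_mono_el xc sXY) andbT.
by move: xc; rewrite clE => /andP[].
Qed.

Lemma rk_cl_U X S : S \subset cl X -> rk (X :|: S) = rk X.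
Proof.
elim: {S}#|S| {-2}S (erefl #|S|) => [|n IH] S cS sS.
  by rewrite (cards0_eq cS) setU0.
have /card_gt0P [x xS] : 0 < #|S| by rewrite cS.
have eS : X :|: S = x |: (X :|: S :\ x).
  by rewrite setUCA setD1K.
have IH1 : rk (X :|: S :\ x) = rk X.
  apply: IH; last exact: subset_trans (subD1set _ _) sS.
  by move: cS; rewrite (cardsD1 x S) xS add1n => -[].
apply/eqP; rewrite eqn_leq eS; apply/andP; split.
  rewrite -IH1; apply: cl_mono_el (subsetUl _ _).
  exact: (subsetP sS).
by apply: rk_mono; rewrite -eS subsetUl.
Qed.

Lemma rk_cl X : X \subset E -> rk (cl X) = rk X.
Proof.
by move=> sX; rewrite -{1}(setUidPr (cl_sub sX)) rk_cl_U.
Qed.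

Lemma flat_cl X : X \subset E -> flat M (cl X).
Proof.
move=> sX; rewrite /flat cl_ground /=; apply/forall_inP => e /setDP[eE enc].
rewrite rk_cl //; move: enc; rewrite clE eE /= -ltnNge => h.
apply: leq_trans h _; apply: rk_mono; apply: setUS; exact: cl_sub.
Qed.

Lemma flat_sub Z : flat M Z -> Z \subset E.
Proof. by case/andP. Qed.

Lemma flatP Z X e : flat M Z -> X \subset Z -> e \in cl X -> e \in Z.
Proof.
case/andP => sZ /forall_inP h sXZ ec; apply/negPn/negP => eZ.
have eE : e \in E by move: ec; rewrite clE => /andP[].
have := h e; rewrite inE eZ eE => /(_ isT).
by rewrite ltnNge (cl_mono_el ec sXZ).
Qed.

Lemma cl_sub_flat Z X : flat M Z -> X \subset Z -> cl X \subset Z.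
Proof. by move=> fZ sXZ; apply/subsetP => e; apply: flatP. Qed.

Lemma flat_clE Z : flat M Z -> cl Z = Z.
Proof.
move=> fZ; apply/eqP; rewrite eqEsubset cl_sub_flat //=.
exact: cl_sub (flat_sub fZ).
Qed.

Lemma flat_of_cl Z : Z \subset E -> cl Z \subset Z -> flat M Z.
Proof.
move=> sZ sc; rewrite /flat sZ /=; apply/forall_inP => e /setDP[eE eZ].
rewrite ltnNge; apply/negP => h; move/negP: eZ; apply; apply: (subsetP sc).
by rewrite clE eE.
Qed.

Lemma flatI A B : flat M A -> flat M B -> flat M (A :&: B).
Proof.
move=> fA fB; apply: flat_of_cl.
  exact: subset_trans (subsetIl _ _) (flat_sub fA).
by rewrite subsetI !cl_sub_flat // ?subsetIl ?subsetIr.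
Qed.

Lemma flat_ground : flat M E.
Proof. by apply: flat_of_cl => //; exact: cl_ground. Qed.

Lemma flat_rk_sub A B : flat M A -> A \subset B -> B \subset E -> rk B <= rk A ->
  B \subset A.
Proof.
move=> fA sAB sB h; apply/subsetP => b bB; apply: (flatP fA (subxx A)).
rewrite clE (subsetP sB) //=; apply: leq_trans h; apply: rk_mono.
by rewrite subUset sub1set bB sAB.
Qed.

Lemma cl_clU X L : X :|: L \subset E -> cl (cl X :|: L) = cl (X :|: L).
Proof.
move=> sXL; apply/eqP; rewrite eqEsubset; apply/andP; split.
  apply: cl_sub_flat; first exact/flat_cl.
  rewrite subUset (clS (subsetUl _ _)) /=.
  exact: subset_trans (subsetUr X L) (cl_sub sXL).
apply: clS; apply: setSU; apply: cl_sub; exact: subset_trans (subsetUl _ _) sXL.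
Qed.

Lemma rk_clU X L : X :|: L \subset E -> rk (cl X :|: L) = rk (X :|: L).
Proof.
move=> sXL; have sX : X \subset E := subset_trans (subsetUl _ _) sXL.
apply/eqP; rewrite eqn_leq (rk_mono (setSU _ (cl_sub sX))) andbT.
rewrite -(rk_cl sXL); apply: rk_mono; rewrite -cl_clU //.
apply: cl_sub; rewrite subUset cl_ground; exact: subset_trans (subsetUr _ _) sXL.
Qed.

Lemma indep_clP X : X \subset E ->
  ind X = [forall x in X, x \notin cl (X :\ x)].
Proof.
move=> sX; apply/idP/forall_inP.
  move=> iX x xX; rewrite clE negb_and; apply/orP; right.
  rewrite setD1K // rk_indep // rk_indep; last exact: indep_hered (subD1set _ _) iX.
  rewrite (cardsD1 x X) xX /=; lia.
move=> h; apply/negPn/negP => niX.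
case: (rk_basis X) => Y /andP[sYX iY] eY.
have : Y != X by apply: contraNneq niX => <-.
move=> nYX; have : ~~ (X \subset Y).
  by apply: contra nYX => sXY; rewrite eqEsubset sYX sXY.
case/subsetPn => x xX xnY.
have := h x xX; rewrite clE (subsetP sX) //= setD1K // -eY => /negP; apply.
apply: rk_max => //.
by apply/subsetP => y yY; rewrite in_setD1 (subsetP sYX) // andbT; apply: contraNneq xnY => <-.
Qed.

Lemma circuit_sub C : circuit M C -> C \subset E.
Proof. by case/and3P. Qed.

Lemma circuit_dep C : circuit M C -> ~~ ind C.
Proof. by case/and3P. Qed.

Lemma circuit_min C D : circuit M C -> D \subset C -> ~~ ind D -> D = C.
Proof.
case/and3P => _ _ /forall_inP h sDC niD; apply/eqP; rewrite eqEsubset sDC /=.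
apply/negPn/negP => /subsetPn [x xC xnD].
move/negP: niD; apply; apply: indep_hered (h x xC).
by apply/subsetP => y yD; rewrite in_setD1 (subsetP sDC) // andbT; apply: contraNneq xnD => <-.
Qed.

Lemma circuit_proper C D : circuit M C -> D \subset C -> D != C -> ind D.
Proof.
by move=> cC sDC nDC; apply/negPn/negP => nD; move/eqP: nDC; apply; apply: circuit_min.
Qed.

Lemma circuit_cl C x : circuit M C -> x \in C -> x \in cl (C :\ x).
Proof.
move=> cC xC; have sC := circuit_sub cC.
rewrite clE (subsetP sC) //= setD1K //.
have i : ind (C :\ x) by case/and3P: cC => _ _ /forall_inP; apply.
rewrite (rk_indep i).
have := rk_le_card C; have := circuit_dep cC; rewrite indep_rkE.
rewrite (cardsD1 x C) xC; lia.
Qed.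

Lemma rk_circuit C x : circuit M C -> x \in C -> rk C = #|C :\ x|.
Proof.
move=> cC xC; have i : ind (C :\ x) by case/and3P: cC => _ _ /forall_inP; apply.
have := circuit_cl cC xC; rewrite clE setD1K // => /andP[_ h].
rewrite (rk_indep i) in h.
by apply/eqP; rewrite eqn_leq h /= -(rk_indep i) rk_mono // subD1set.
Qed.

Lemma circuit_exists I e : ind I -> e \in E -> ~~ ind (e |: I) ->
  exists2 C : {set T}, circuit M C & (C \subset e |: I) && (e \in C).
Proof.
move=> iI eE ni.
pose P := fun D : {set T} => (D \subset e |: I) && ~~ ind D.
have P0 : P (e |: I) by rewrite /P subxx.
case: (@arg_minnP _ (e |: I) P (fun D => #|D|) P0) => D /andP[sD nD] Hmin.
have sE : e |: I \subset E by rewrite subUset sub1set eE indep_sub.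
have hD : forall x, x \in D -> ind (D :\ x).
  move=> x xD; apply/negPn/negP => nx.
  have := Hmin (D :\ x); rewrite /P nx (subset_trans (subD1set _ _) sD) => /(_ isT).
  by rewrite (cardsD1 x D) xD add1n ltnn.
exists D.
  by rewrite /circuit (subset_trans sD sE) nD; apply/forall_inP.
rewrite sD /=; apply/negPn/negP => enD.
move/negP: nD; apply; apply: indep_hered iI.
apply/subsetP => y yD; have := subsetP sD y yD; rewrite in_setU1.
by case/orP => // /eqP ey; move: enD; rewrite -ey yD.
Qed.

Lemma circuit_elim C1 C2 e : circuit M C1 -> circuit M C2 -> C1 != C2 ->
  e \in C1 -> e \in C2 -> ~~ ind ((C1 :|: C2) :\ e).
Proof.
move=> c1 c2 n12 e1 e2.
have r1 := rk_circuit c1 e1; have r2 := rk_circuit c2 e2.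
have i12 : ind (C1 :&: C2).
  refine (circuit_proper c1 (subsetIl _ _) _).
  apply/negP => /eqP h; move/negP: n12; apply; apply/eqP.
  have s12 : C1 \subset C2 by rewrite -h subsetIr.
  by rewrite (circuit_min c2 s12 (circuit_dep c1)).
have := rk_submod C1 C2; rewrite r1 r2 (rk_indep i12).
have := cardsUI C1 C2; rewrite (cardsD1 e C1) (cardsD1 e C2) e1 e2.
have eU : e \in C1 :|: C2 by rewrite inE e1.
rewrite (cardsD1 e (C1 :|: C2)) eU.
move=> hc hs; apply/negP => iD.
have := rk_max (subD1set (C1 :|: C2) e) iD.
lia.
Qed.

Lemma cl_dep X e : ind X -> e \notin X -> e \in cl X -> ~~ ind (e |: X).
Proof.
move=> iX enX; rewrite clE => /andP[_ h]; rewrite indep_rkE cardsU1 enX.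
rewrite (rk_indep iX) in h; apply/negP => /eqP h'; rewrite h' /= in h; lia.
Qed.

Lemma chord C A B e : circuit M C -> A :|: B = C -> A :&: B = set0 ->
  A != C -> B != C -> e \notin C -> e \in cl A -> e \in cl B -> ind [set e] ->
  exists (C1 C2 : {set T}) (e : T), [/\ circuit M C1, circuit M C2,
     C1 :&: C2 = [set e] & C = (C1 :|: C2) :\ e].
Proof.
move=> cC eAB dAB nA nB eC clA clB ie.
have sA : A \subset C by rewrite -eAB subsetUl.
have sB : B \subset C by rewrite -eAB subsetUr.
have iA := circuit_proper cC sA nA.
have iB := circuit_proper cC sB nB.
have eE : e \in E by move: clA; rewrite clE => /andP[].
have enA : e \notin A by apply: contra eC; apply/subsetP.
have enB : e \notin B by apply: contra eC; apply/subsetP.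
have dep : forall X, ind X -> e \notin X -> e \in cl X -> ~~ ind (e |: X).
  move=> X iX enX; rewrite clE => /andP[_ h]; rewrite indep_rkE cardsU1 enX.
  by rewrite (rk_indep iX) in h; apply/eqP => h'; rewrite h' in h; rewrite ltnn in h.
case: (circuit_exists iA eE (dep A iA enA clA)) => C1 c1 /andP[s1 e1].
case: (circuit_exists iB eE (dep B iB enB clB)) => C2 c2 /andP[s2 e2].
have n12 : C1 != C2.
  apply/eqP => h12.
  have sub : C1 \subset [set e].
    apply/subsetP => x x1; rewrite inE; apply/negPn/negP => nxe.
    have xA : x \in A by have := subsetP s1 x x1; rewrite in_setU1 (negPf nxe).
    have xB : x \in B.
      by have := subsetP s2 x; rewrite -h12 => /(_ x1); rewrite in_setU1 (negPf nxe).
    have : x \in A :&: B by rewrite inE xA xB.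
    by rewrite dAB inE.
  by move/negP: (circuit_dep c1); apply; apply: indep_hered sub ie.
have Dd := circuit_elim c1 c2 n12 e1 e2.
have sD : (C1 :|: C2) :\ e \subset C.
  apply/subsetP => x; rewrite in_setD1 => /andP[nxe]; rewrite inE => /orP[x1|x2].
    have := subsetP s1 x x1; rewrite in_setU1 (negPf nxe) /= => xA; exact: subsetP sA x xA.
  have := subsetP s2 x x2; rewrite in_setU1 (negPf nxe) /= => xB; exact: subsetP sB x xB.
have eD := circuit_min cC sD Dd.
exists C1, C2, e; split => //.
apply/setP => x; rewrite !inE; apply/andP/eqP => [[x1 x2]|->]; last by rewrite e1 e2.
apply/eqP/negPn/negP => nxe.
have xA : x \in A by have := subsetP s1 x x1; rewrite in_setU1 (negPf nxe).
have xB : x \in B by have := subsetP s2 x x2; rewrite in_setU1 (negPf nxe).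
have : x \in A :&: B by rewrite inE xA xB.
by rewrite dAB inE.
Qed.

Lemma basis_cl Z B : flat M Z -> B \subset Z -> ind B -> #|B| = rk Z -> cl B = Z.
Proof.
move=> fZ sBZ iB cB; apply/eqP; rewrite eqEsubset cl_sub_flat //=.
have sB := indep_sub iB.
apply: flat_rk_sub; [exact: flat_cl | exact: cl_sub_flat | exact: flat_sub |].
by rewrite rk_cl // (rk_indep iB) cB.
Qed.

Lemma basis_trace Z B (B0 : {set T}) W : ind B -> B \subset Z -> B0 \subset B -> B0 \subset W ->
  #|B0| = rk (Z :&: W) -> B :&: W = B0.
Proof.
move=> iB sBZ s0 s0W c0; apply/esym/eqP.
have s : B0 \subset B :&: W by rewrite subsetI s0 s0W.
rewrite -(subset_leqif_cards s) eqn_leq subset_leq_card //= c0.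
apply: rk_max; first exact: setSI.
exact: indep_hered (subsetIl _ _) iB.
Qed.

End Basics.


Section Modular.
Variable T : finType.
Variable M : matroid T.
Local Notation E := (ground M).
Local Notation ind := (indep M).
Local Notation rk := (rk M).
Local Notation cl := (cl M).
Implicit Types X Y Z A B C D I L S G K W : {set T}.

Lemma mod_rk W G K : modular_flat M W -> flat M G -> K \subset W ->
  rk (G :|: K) + rk (G :&: W) = rk G + rk ((G :&: W) :|: K).
Proof.
move=> [fW mW] fG sKW.
have e1 : G :|: ((G :&: W) :|: K) = G :|: K.
  apply/setP => x; rewrite !inE; have := subsetP sKW x.
  by case: (x \in G); case: (x \in K); case: (x \in W) => //= ->.
have e2 : G :&: ((G :&: W) :|: K) = G :&: W.
  apply/setP => x; rewrite !inE; have := subsetP sKW x.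
  by case: (x \in G); case: (x \in K); case: (x \in W) => //= ->.
have e3 : (G :|: K) :|: W = W :|: G.
  apply/setP => x; rewrite !inE; have := subsetP sKW x.
  by case: (x \in G); case: (x \in K); case: (x \in W) => //= ->.
have e4 : (G :|: K) :&: W = (G :&: W) :|: K.
  apply/setP => x; rewrite !inE; have := subsetP sKW x.
  by case: (x \in G); case: (x \in K); case: (x \in W) => //= ->.
have h1 := rk_submod M G ((G :&: W) :|: K); rewrite e1 e2 in h1.
have h2 := rk_submod M (G :|: K) W; rewrite e3 e4 in h2.
have h3 := mW G fG; rewrite setIC in h3.
lia.
Qed.

Lemma mod_cl W G L : modular_flat M W -> flat M G -> L \subset W ->
  cl (G :|: L) :&: W = cl ((G :&: W) :|: L).
Proof.
move=> mfW fG sLW; have [fW mW] := mfW.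
have sG := flat_sub fG; have sW := flat_sub fW.
have sGL : G :|: L \subset E by rewrite subUset sG (subset_trans sLW sW).
have sGW : G :|: W \subset E by rewrite subUset sG sW.
set F := cl (G :|: L).
have fF : flat M F := flat_cl sGL.
have h1 := mW F fF.
have rF : rk F = rk (G :|: L) := rk_cl sGL.
have rWF : rk (W :|: F) = rk (W :|: G).
  apply/eqP; rewrite eqn_leq; apply/andP; split.
    have : rk (W :|: F) <= rk (cl (G :|: W)).
      apply: rk_mono; rewrite subUset; apply/andP; split.
        exact: subset_trans (subsetUr G W) (cl_sub sGW).
      by apply: clS; apply: setUS.
    by rewrite rk_cl // [G :|: W]setUC.
  apply: rk_mono; apply: setUS; exact: subset_trans (subsetUl _ _) (cl_sub sGL).
have h2 := mod_rk mfW fG sLW.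
have h3 := mW G fG.
have sub : cl ((G :&: W) :|: L) \subset F :&: W.
  apply: cl_sub_flat; first exact: flatI.
  rewrite subUset !subsetI sLW andbT; apply/andP; split.
    rewrite subsetIr andbT; apply: subset_trans (subsetIl _ _) _.
    exact: subset_trans (subsetUl _ _) (cl_sub sGL).
  exact: subset_trans (subsetUr _ _) (cl_sub sGL).
have sGWL : (G :&: W) :|: L \subset E.
  by rewrite subUset (subset_trans (subsetIl _ _) sG) (subset_trans sLW sW).
apply/eqP; rewrite eqEsubset sub andbT.
apply: flat_rk_sub; first exact: flat_cl.
- done.
- exact: subset_trans (subsetIl _ _) (cl_ground _ _).
rewrite rk_cl //.
rewrite [W :&: F]setIC rF rWF in h1. rewrite [W :&: G]setIC in h3.
lia.
Qed.


Lemma mod_drop W B1 B0 x : modular_flat M W -> ind B1 -> B0 \subset B1 ->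
  B0 \subset W -> rk (cl B1 :&: W) = #|B0| -> x \in B0 ->
  cl (B1 :\ x) :&: W \subset cl (B0 :\ x).
Proof.
move=> [fW mW] iB1 s01 s0W rB xB0.
have sB1 := indep_sub iB1; have sW := flat_sub fW.
have xB1 := subsetP s01 x xB0; have xW := subsetP s0W x xB0.
have sB1x : B1 :\ x \subset E := subset_trans (subD1set _ _) sB1.
have iB1x : ind (B1 :\ x) := indep_hered (subD1set _ _) iB1.
have sB0x : B0 :\ x \subset B1 :\ x by apply: setSD.
have iB0x : ind (B0 :\ x) := indep_hered sB0x iB1x.
have h1 := mW _ (flat_cl sB1x).
have h2 := mW _ (flat_cl sB1).
rewrite setUC rk_clU ?subUset ?sB1x ?sW // in h1.
rewrite setUC rk_clU ?subUset ?sB1 ?sW // in h2.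
have eU : B1 :\ x :|: W = B1 :|: W.
  apply/setP => y; rewrite !inE; case: (eqVneq y x) => [->|] //=.
  by rewrite xW !orbT.
rewrite eU in h1.
rewrite rk_cl // (rk_indep iB1x) in h1.
rewrite rk_cl // (rk_indep iB1) in h2.
rewrite setIC rB in h2.
have c1 : #|B1| = #|B1 :\ x|.+1 by rewrite (cardsD1 x B1) xB1.
have c0 : #|B0| = #|B0 :\ x|.+1 by rewrite (cardsD1 x B0) xB0.
have sA : cl (B0 :\ x) \subset cl (B1 :\ x) :&: W.
  apply: cl_sub_flat; first exact: flatI (flat_cl sB1x) fW.
  rewrite subsetI (subset_trans sB0x (cl_sub sB1x)) /=.
  exact: subset_trans (subD1set _ _) s0W.
apply: flat_rk_sub.
- exact: flat_cl (indep_sub iB0x).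
- exact: sA.
- exact: subset_trans (subsetIr _ _) sW.
rewrite rk_cl ?(indep_sub iB0x) // (rk_indep iB0x) setIC.
move: h1 h2; rewrite c1 c0; slia.
Qed.

End Modular.

Import GRing.Theory.

Section LinAlg.
Variable T : finType.
Variable r : nat.
Variable f : T -> 'rV['F_2]_r.
Implicit Types X Y Z A B C D I L S G K W : {set T}.

Lemma rows_subP X m (R : 'M['F_2]_(m, r)) :
  reflect (forall x, x \in X -> (f x <= R)%MS) (rows_of f X <= R)%MS.
Proof.
apply: (iffP row_subP) => h.
  move=> x xX; have := h (enum_rank_in xX x).
  by rewrite rowK enum_rankK_in.
by move=> i; rewrite rowK; apply: h; exact: enum_valP.
Qed.

Lemma row_in_rows X x : x \in X -> (f x <= rows_of f X)%MS.
Proof. by move=> xX; have /rows_subP := submx_refl (rows_of f X); apply. Qed.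

Lemma rank_rows_U X Y :
  \rank (rows_of f (X :|: Y)) = \rank (rows_of f X + rows_of f Y)%MS.
Proof.
apply/eqmx_rank/andP; split.
  apply/rows_subP => y; rewrite inE => /orP[yX|yY].
    exact: submx_trans (row_in_rows yX) (addsmxSl _ _).
  exact: submx_trans (row_in_rows yY) (addsmxSr _ _).
rewrite addsmx_sub; apply/andP; split; apply/rows_subP => y yX; apply: row_in_rows;
  by rewrite inE yX ?orbT.
Qed.

Lemma rank_rows_U1 x X :
  \rank (rows_of f (x |: X)) = \rank (f x + rows_of f X)%MS.
Proof.
apply/eqmx_rank/andP; split.
  apply/rows_subP => y; rewrite in_setU1 => /orP[/eqP->|yX].
    exact: addsmxSl.
  exact: submx_trans (row_in_rows yX) (addsmxSr _ _).
rewrite addsmx_sub row_in_rows ?setU11 //=; apply/rows_subP => y yX; apply: row_in_rows.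
by rewrite in_setU1 yX orbT.
Qed.

Lemma rank_add_row (v : 'rV['F_2]_r) m (A : 'M['F_2]_(m, r)) :
  v != 0%R -> ~~ (v <= A)%MS -> \rank (v + A)%MS = (\rank A).+1.
Proof.
move=> nz nvA; have := mxrank_sum_cap v A; rewrite rank_rV nz.
have hc : (v :&: A <= v)%MS := capmxSl _ _.
case: (mxrank_leqif_sup hc) => le eq.
have : \rank (v :&: A)%MS != \rank v.
  rewrite eq; apply: contra nvA => h; exact: submx_trans h (capmxSr _ _).
rewrite rank_rV nz /=; move: le; rewrite rank_rV nz /=; lia.
Qed.

Lemma rows_sub_mono X Y : X \subset Y -> (rows_of f X <= rows_of f Y)%MS.
Proof.
move=> sXY; apply/rows_subP => x xX; apply: row_in_rows.
exact: subsetP sXY x xX.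
Qed.

Lemma rank_rows_mono X Y : X \subset Y -> \rank (rows_of f X) <= \rank (rows_of f Y).
Proof.
move=> sXY; apply: mxrankS; apply/rows_subP => x xX; apply: row_in_rows.
exact: subsetP sXY x xX.
Qed.

Lemma rank_rows_sub_el X e : (f e <= rows_of f X)%MS ->
  \rank (rows_of f (e |: X)) = \rank (rows_of f X).
Proof.
move=> h; apply/eqmx_rank/andP; split.
  by apply/rows_subP => y; rewrite in_setU1 => /orP[/eqP->|yX] //; exact: row_in_rows.
by apply/rows_subP => y yX; apply: row_in_rows; rewrite in_setU1 yX orbT.
Qed.

End LinAlg.

Section PG.
Variable T : finType.
Variable M : matroid T.
Variable S : {set T}.
Variable r : nat.
Variable f : T -> 'rV['F_2]_r.
Hypothesis hinj : {in S &, injective f}.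
Hypothesis himg : f @: S = [set v : 'rV['F_2]_r | v != 0%R].
Hypothesis hind : forall X : {set T}, X \subset S -> indep M X = row_free (rows_of f X).
Implicit Types X Y Z A B C D I L G K W : {set T}.
Local Notation rk := (rk M).
Local Notation cl := (cl M).

Lemma pg_nz x : x \in S -> f x != 0%R.
Proof. by move=> xS; have := imset_f f xS; rewrite himg inE. Qed.

Lemma pg_indE X : X \subset S -> indep M X = (\rank (rows_of f X) == #|X|).
Proof. by move=> sX; rewrite hind. Qed.

Lemma pg_ind1 x : x \in S -> indep M [set x].
Proof.
move=> xS; rewrite pg_indE ?sub1set // eqn_leq rank_leq_row /=.
rewrite [in X in X <= _]cards1.
have := mxrankS (row_in_rows f (set11 x)); rewrite rank_rV pg_nz //.
Qed.

Lemma pg_sub : S \subset ground M.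
Proof.
by apply/subsetP => x xS; have := indep_sub (pg_ind1 xS); rewrite sub1set.
Qed.

Lemma pg_rk X : X \subset S -> rk X = \rank (rows_of f X).
Proof.
move=> sX; case: (rk_basis M X) => Y /andP[sYX iY] eY.
have sY : Y \subset S := subset_trans sYX sX.
have rY : \rank (rows_of f Y) = #|Y| by apply/eqP; rewrite -pg_indE.
apply/eqP; rewrite eqn_leq; apply/andP; split.
  by rewrite -eY -rY; apply: rank_rows_mono.
rewrite -eY -rY; apply: mxrankS; apply/rows_subP => x xX.
case xY: (x \in Y); first exact: row_in_rows.
apply/negPn/negP => nle.
have sxY : x |: Y \subset X by rewrite subUset sub1set xX sYX.
have ixY : indep M (x |: Y).
  rewrite pg_indE ?(subset_trans sxY sX) // rank_rows_U1 rank_add_row //.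
    by rewrite rY cardsU1 xY.
  by apply: pg_nz; exact: subsetP sX x xX.
have := rk_max sxY ixY; rewrite -eY cardsU1 xY /=; lia.
Qed.

Lemma pg_cl_rows X e : X \subset S -> e \in S -> (f e <= rows_of f X)%MS -> e \in cl X.
Proof.
move=> sX eS h; rewrite clE (subsetP pg_sub) //= !pg_rk //.
  by rewrite rank_rows_sub_el.
by rewrite subUset sub1set eS sX.
Qed.

Lemma pg_skew X Y : X \subset S -> Y \subset S -> rk (X :|: Y) < rk X + rk Y ->
  exists2 e, e \in S & (e \in cl X) && (e \in cl Y).
Proof.
move=> sX sY; rewrite !pg_rk ?subUset ?sX // rank_rows_U.
rewrite -mxrank_sum_cap -{1}[\rank (_ + _)%MS]addn0 ltn_add2l lt0n mxrank_eq0 => nz.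
have [i nzi] : exists i, row i (rows_of f X :&: rows_of f Y)%MS != 0%R.
  apply/existsP; apply: contraR nz => /existsPn h; apply/eqP/row_matrixP => i.
  by rewrite row0; apply/eqP; have := h i; rewrite negbK.
have : row i (rows_of f X :&: rows_of f Y)%MS \in f @: S by rewrite himg inE.
case/imsetP => e eS ev.
have le := row_sub i (rows_of f X :&: rows_of f Y)%MS; rewrite ev in le.
exists e => //; rewrite !pg_cl_rows //.
  exact: submx_trans le (capmxSr _ _).
exact: submx_trans le (capmxSl _ _).
Qed.

End PG.

Lemma F2_cases (c : 'F_2) : c = 0%R \/ c = 1%R.
Proof. case: c => [[|[|n]] h]. left. apply: val_inj. done. right. by apply: val_inj. done. Qed.

Lemma F2_11 : (1 + 1 : 'F_2)%R = 0%R.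
Proof. by apply: val_inj. Qed.

Lemma F2_vv r (v : 'rV['F_2]_r) : (v + v = 0)%R.
Proof. by rewrite -{1 2}(scale1r v) -scalerDl F2_11 scale0r. Qed.

Lemma F2_scal r (c : 'F_2) (v : 'rV['F_2]_r) : (c *: v = 0)%R \/ (c *: v = v)%R.
Proof. by case: (F2_cases c) => ->; [left; rewrite scale0r | right; rewrite scale1r]. Qed.

Lemma F2_row11 r (u : 'M['F_2]_1) (v : 'rV['F_2]_r) :
  (u *m v = 0)%R \/ (u *m v = v)%R.
Proof. by rewrite [u]mx11_scalar mul_scalar_mx; apply: F2_scal. Qed.


Section PGbase.
Variable T : finType.
Variable M : matroid T.
Variable r : nat.
Variable f : T -> 'rV['F_2]_r.
Hypothesis hinj : {in ground M &, injective f}.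
Hypothesis himg : f @: ground M = [set v : 'rV['F_2]_r | v != 0%R].
Hypothesis hind : forall X : {set T}, X \subset ground M -> indep M X = row_free (rows_of f X).
Implicit Types X Y Z A B C D I L G K W : {set T}.
Local Notation rk := (rk M).
Local Notation cl := (cl M).
Local Notation E := (ground M).

Lemma pgb_chordal : chordal M.
Proof.
move=> C cC c4.
have sC := circuit_sub cC.
have /card_gt1P [a [b [aC bC nab]]] : 1 < #|C| by lia.
set A := [set a; b]; set B := C :\: A.
have sA : A \subset C by rewrite subUset !sub1set aC bC.
have cA : #|A| = 2 by rewrite cards2 nab.
have nA : A != C by apply/eqP => eAC; move: c4; rewrite -eAC cA.
have aB : a \notin B by rewrite inE negb_and negbK set21.
have nB : B != C by apply/eqP => eBC; move: aB; rewrite eBC aC.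
have sB : B \subset C := subsetDl _ _.
have iA := circuit_proper cC sA nA.
have iB := circuit_proper cC sB nB.
have eU : A :|: B = C by rewrite -{1}(setIidPr sA) setID.
have dI : A :&: B = set0 by rewrite /B setDE setICA setICr setI0.
have cB : #|B| = #|C| - 2 by rewrite /B cardsD (setIidPr sA) cA.
have rC : rk C = #|C| - 1.
  by rewrite (rk_circuit cC aC); move: (cardsD1 a C); rewrite aC add1n => ->; rewrite subn1.
have sAE := subset_trans sA sC; have sBE := subset_trans sB sC.
have lt : rk (A :|: B) < rk A + rk B.
  rewrite eU rC (rk_indep iA) (rk_indep iB) cA cB; move: c4; slia.
case: (pg_skew himg hind sAE sBE lt) => e eE /andP[clA clB].
have key : forall X, X \subset C -> indep M X -> e \notin X -> e \in cl X ->
    #|X|.+1 < #|C| -> e \notin C.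
  move=> X sX iX enX clX cX; apply/negP => eC.
  have sXe : e |: X \subset C by rewrite subUset sub1set eC sX.
  have nXe : e |: X != C by apply/eqP => h; move: cX; rewrite -h cardsU1 enX /=; slia.
  by move/negP: (cl_dep iX enX clX); apply; exact: circuit_proper cC sXe nXe.
have enC : e \notin C.
  case eA: (e \in A).
    have enB : e \notin B.
      apply/negP => eB; have : e \in A :&: B by rewrite inE eA eB.
      by rewrite dI inE.
    apply: (key B sB iB enB clB); rewrite cB; move: c4; slia.
  apply: (key A sA iA (negbT eA) clA); rewrite cA; move: c4; slia.
have sA' : A != C := nA.
have := chord cC eU dI nA nB enC clA clB (pg_ind1 himg hind eE).
done.
Qed.

Lemma pgb_flat_vec X v : flat M X -> (v <= rows_of f X)%MS -> v != 0%R ->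
  exists2 x, x \in X & v = f x.
Proof.
move=> fX le nz.
have : v \in f @: E by rewrite himg inE.
case/imsetP => e eE ev; subst v; exists e => //.
apply: (flatP fX (subxx X)); exact: (pg_cl_rows himg hind (flat_sub fX) eE le).
Qed.

Lemma pgb_modular X Y : flat M X -> flat M Y ->
  rk X + rk Y = rk (X :|: Y) + rk (X :&: Y).
Proof.
move=> fX fY; have sX := flat_sub fX; have sY := flat_sub fY.
have sXY : X :|: Y \subset E by rewrite subUset sX sY.
have sIXY : X :&: Y \subset E := subset_trans (subsetIl _ _) sX.
rewrite !(pg_rk himg hind) // rank_rows_U -mxrank_sum_cap; congr (_ + _).
apply/eqmx_rank/andP; split.
  apply/row_subP => i; set v := row i _.
  case: (eqVneq v 0%R) => [->|nz]; first exact: sub0mx.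
  have vX : (v <= rows_of f X)%MS := submx_trans (row_sub _ _) (capmxSl _ _).
  have vY : (v <= rows_of f Y)%MS := submx_trans (row_sub _ _) (capmxSr _ _).
  case: (pgb_flat_vec fX vX nz) => x xX ex.
  case: (pgb_flat_vec fY vY nz) => y yY ey.
  have exy : x = y by apply: hinj; [exact: subsetP sX x xX | exact: subsetP sY y yY | rewrite -ex -ey].
  by rewrite ex; apply: row_in_rows; rewrite inE xX exy yY.
by rewrite sub_capmx !(rows_sub_mono f) ?subsetIl ?subsetIr.
Qed.


Section Sub.
Variable S' : {set T}.
Variable r' : nat.
Variable g : T -> 'rV['F_2]_r'.
Hypothesis ginj : {in S' &, injective g}.
Hypothesis gimg : g @: S' = [set v : 'rV['F_2]_r' | v != 0%R].
Hypothesis gind : forall X : {set T}, X \subset S' -> indep M X = row_free (rows_of g X).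

Lemma sS'E : S' \subset E.
Proof. exact: (pg_sub gimg gind). Qed.

Lemma f_nz x : x \in E -> f x != 0%R.
Proof. exact: (pg_nz himg). Qed.

Lemma rank_f1 y : y \in E -> \rank (rows_of f [set y]) = 1.
Proof.
move=> yE; have := pg_ind1 himg hind yE; rewrite (pg_indE hind) ?sub1set //.
by move/eqP => ->; rewrite cards1.
Qed.

Lemma rank_f2 x y : x \in E -> y \in E -> x != y -> \rank (rows_of f [set x; y]) = 2.
Proof.
move=> xE yE nxy; rewrite rank_rows_U1 rank_add_row ?rank_f1 ?f_nz //.
apply/negP => /submxP [u eu].
have le : (f y <= rows_of f [set y])%MS by apply: row_in_rows; rewrite set11.
have : (f x <= f y)%MS.
  apply: submx_trans (_ : (f x <= rows_of f [set y])%MS) _; first by apply/submxP; exists u.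
  by apply/rows_subP => z; rewrite inE => /eqP ->; exact: submx_refl.
case/submxP => w ew; case: (F2_row11 w (f y)); rewrite -ew => e0.
  by move: (f_nz xE); rewrite e0 eqxx.
by move/eqP: nxy; apply; apply: hinj.
Qed.

Lemma third x y : x \in S' -> y \in S' -> x != y -> exists2 z, z \in S' & f z = (f x + f y)%R.
Proof.
move=> xS yS nxy.
have sS := sS'E.
have xE := subsetP sS x xS; have yE := subsetP sS y yS.
have nz : (g x + g y)%R != 0%R.
  apply/negP => /eqP h; move/eqP: nxy; apply; apply: ginj => //.
  by rewrite -[g x]addr0 -(F2_vv (g y)) addrA h add0r.
have : (g x + g y)%R \in g @: S' by rewrite gimg inE.
case/imsetP => z zS ez.
have gnz : forall w, w \in S' -> g w != 0%R.
  by move=> w wS; have := imset_f g wS; rewrite gimg inE.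
have nzx : z != x.
  apply/eqP => e; rewrite e in ez.
  have h : (g y = 0)%R by apply: (@addrI _ (g x)); rewrite addr0 ez.
  by move: (gnz y yS); rewrite h eqxx.
have nzy : z != y.
  apply/eqP => e; rewrite e in ez.
  have h : (g x = 0)%R by apply: (@addIr _ (g y)); rewrite add0r ez.
  by move: (gnz x xS); rewrite h eqxx.
exists z => //.
have zE := subsetP sS z zS.
set X3 := z |: [set x; y].
have c3 : #|X3| = 3 by rewrite /X3 cardsU1 !inE negb_or nzx nzy cards2 nxy.
have sX3 : X3 \subset S' by rewrite !subUset !sub1set zS xS yS.
have dep : ~~ indep M X3.
  rewrite gind // /row_free rank_rows_U1.
  have le : (g z <= rows_of g [set x; y])%MS.
    rewrite -ez; apply: addmx_sub; apply: row_in_rows; rewrite !inE eqxx ?orbT //.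
  have -> : \rank (g z + rows_of g [set x; y])%MS = \rank (rows_of g [set x; y]).
    apply/eqmx_rank/andP; split; last exact: addsmxSr.
    by rewrite addsmx_sub le submx_refl.
  have := rank_leq_row (rows_of g [set x; y]).
  rewrite [in X in _ <= X]cards2 nxy c3 /= => h.
  by apply/negP => /eqP h'; move: h; rewrite h'.
have le : (f z <= rows_of f [set x; y])%MS.
  apply/negPn/negP => nle; move/negP: dep; apply.
  rewrite (hind (subset_trans sX3 sS)) /row_free rank_rows_U1 rank_add_row ?f_nz //.
  by rewrite rank_f2 // c3.
have : (f z <= f x + f y)%MS.
  apply: submx_trans le _; apply/rows_subP => w; rewrite !inE => /orP[]/eqP->.
    exact: addsmxSl.
  exact: addsmxSr.
move/sub_addsmxP => [[u1 u2] /= e].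
case: (F2_row11 u1 (f x)) => e1; case: (F2_row11 u2 (f y)) => e2; rewrite e1 e2 in e.
- by move: (f_nz zE); rewrite e addr0 eqxx.
- by case: (negP nzy); apply/eqP; apply: hinj => //; rewrite e add0r.
- by case: (negP nzx); apply/eqP; apply: hinj => //; rewrite e addr0.
- done.
Qed.


Lemma sumclosed v : (v <= rows_of f S')%MS -> v = 0%R \/ v \in f @: S'.
Proof.
case/submxP => u ->; rewrite mulmx_sum_row.
apply: (big_ind (fun w => w = 0%R \/ w \in f @: S')).
- by left.
- move=> a b [->|ha] [->|hb]; rewrite ?add0r ?addr0; auto.
  case/imsetP: ha => x xS ->; case/imsetP: hb => y yS ->.
  case: (eqVneq x y) => [->|nxy]; first by left; exact: F2_vv.
  by case: (third xS yS nxy) => z zS <-; right; exact: imset_f.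
- move=> i _; rewrite rowK; case: (F2_scal (u 0%R i) (f (enum_val i))) => ->; first by left.
  by right; apply: imset_f; exact: enum_valP.
Qed.

Lemma restr_flat : flat M S'.
Proof.
have sS := sS'E.
apply: flat_of_cl => //; apply/subsetP => e; rewrite clE => /andP[eE].
have sSe : e |: S' \subset E by rewrite subUset sub1set eE sS.
rewrite !(pg_rk himg hind) // rank_rows_U1 => h.
have le : (f e <= rows_of f S')%MS.
  apply/negPn/negP => nle; move: h; rewrite rank_add_row ?f_nz //; lia.
case: (sumclosed le) => [e0|]; first by move: (f_nz eE); rewrite e0 eqxx.
case/imsetP => s sS' es; have -> : e = s by apply: hinj => //; exact: subsetP sS s sS'.
done.
Qed.

End Sub.

Lemma pgb_inv S' : binary_pg_on M S' -> modular_flat M S'.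
Proof.
case=> r' [g [gi gim gin]]; split; first exact: (restr_flat gi gim gin).
move=> X fX; apply: pgb_modular => //; exact: (restr_flat gi gim gin).
Qed.
End PGbase.


Record GP (T : finType) (M1 M2 M : matroid T) (W : {set T}) : Prop := {
  gpE : ground M = ground M1 :|: ground M2;
  gpW : ground M1 :&: ground M2 = W;
  gpm1 : modular_flat M1 W;
  gpm2 : modular_flat M2 W;
  gpN : forall X : {set T}, X \subset W -> indep M1 X = indep M2 X;
  gpF : forall Z : {set T}, flat M Z <->
     [/\ Z \subset ground M, flat M1 (Z :&: ground M1) & flat M2 (Z :&: ground M2)] }.

Lemma GP_swap (T : finType) (M1 M2 M : matroid T) W : GP M1 M2 M W -> GP M2 M1 M W.
Proof.
case=> hE hW h1 h2 hN hF; split => //.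
- by rewrite setUC.
- by rewrite setIC.
- by move=> X sX; rewrite hN.
- by move=> Z; rewrite hF; split; case.
Qed.

Section GPsec.
Variable T : finType.
Variables M1 M2 M : matroid T.
Variable W : {set T}.
Hypothesis G : GP M1 M2 M W.
Implicit Types X Y Z A B C D I L K F : {set T}.
Local Notation E1 := (ground M1).
Local Notation E2 := (ground M2).
Local Notation E := (ground M).

Lemma fW1 : flat M1 W. Proof. by case: (gpm1 G). Qed.
Lemma fW2 : flat M2 W. Proof. by case: (gpm2 G). Qed.
Lemma sW1 : W \subset E1. Proof. by rewrite -(gpW G) subsetIl. Qed.
Lemma sW2 : W \subset E2. Proof. by rewrite -(gpW G) subsetIr. Qed.
Lemma sE1 : E1 \subset E. Proof. by rewrite (gpE G) subsetUl. Qed.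
Lemma sE2 : E2 \subset E. Proof. by rewrite (gpE G) subsetUr. Qed.

Lemma rkN X : X \subset W -> rk M1 X = rk M2 X.
Proof.
move=> sX; rewrite /rk; apply: eq_bigl => Y.
case sYX: (Y \subset X) => //=; apply: (gpN G); exact: subset_trans sYX sX.
Qed.

Lemma clW1 X : X \subset W -> cl M1 X \subset W.
Proof. by move=> sX; apply: cl_sub_flat fW1 sX. Qed.

Lemma clN X : X \subset W -> cl M1 X = cl M2 X.
Proof.
move=> sX; apply/setP => x.
case xW: (x \in W); last first.
  apply/idP/idP => h.
    by move: (subsetP (clW1 sX) x h); rewrite xW.
  by move: (subsetP (cl_sub_flat fW2 sX) x h); rewrite xW.
have sxX : x |: X \subset W by rewrite subUset sub1set xW sX.
by rewrite !clE (subsetP sW1) ?(subsetP sW2) //= !rkN.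
Qed.

Lemma flatN X : X \subset W -> flat M1 X -> flat M2 X.
Proof.
move=> sX fX; apply: flat_of_cl; first exact: subset_trans sX sW2.
by rewrite -clN // flat_clE.
Qed.

Lemma flat1_flat F : flat M1 F -> flat M F.
Proof.
move=> fF; have sF := flat_sub fF.
apply/(gpF G); split.
- exact: subset_trans sF sE1.
- by rewrite (setIidPl sF).
have -> : F :&: E2 = F :&: W by rewrite -(gpW G) setIA (setIidPl sF).
apply: flatN; [exact: subsetIr | exact: flatI fW1].
Qed.

Lemma flat_flat1 Z : flat M Z -> flat M1 (Z :&: E1).
Proof. by case/(gpF G). Qed.

Lemma flat_flat2 Z : flat M Z -> flat M2 (Z :&: E2).
Proof. by case/(gpF G). Qed.

Lemma cl1E X x : X \subset E1 -> x \in E1 -> (x \in cl M X) = (x \in cl M1 X).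
Proof.
move=> sX xE; have sXE := subset_trans sX sE1.
apply/idP/idP => h.
  apply: (flatP (flat1_flat (flat_cl sX)) (cl_sub sX) h).
have := flatP (flat_flat1 (flat_cl sXE)) _ h.
rewrite inE => /(_ _) /andP[] //.
by rewrite subsetI cl_sub.
Qed.

Lemma ind1E X : X \subset E1 -> indep M X = indep M1 X.
Proof.
move=> sX; have sXE := subset_trans sX sE1.
rewrite (indep_clP sXE) (indep_clP sX); apply: eq_forallb_in => x xX.
rewrite cl1E //; [exact: subset_trans (subD1set _ _) sX | exact: subsetP sX x xX].
Qed.

Lemma rk1E X : X \subset E1 -> rk M X = rk M1 X.
Proof.
move=> sX; rewrite /rk; apply: eq_bigl => Y.
case sYX: (Y \subset X) => //=; apply: ind1E; exact: subset_trans sYX sX.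
Qed.

Lemma circuit1E C : C \subset E1 -> circuit M C = circuit M1 C.
Proof.
move=> sC; rewrite /circuit sC (subset_trans sC sE1) ind1E //=; congr (_ && _).
apply: eq_forallb_in => x xC; apply: ind1E; exact: subset_trans (subD1set _ _) sC.
Qed.


Lemma set_split2 Z : Z \subset E -> Z = (Z :&: E1) :|: (Z :&: E2).
Proof. by move=> sZ; rewrite -setIUr -(gpE G) (setIidPl sZ). Qed.

Lemma Z2E1 Z : Z \subset E2 -> Z :&: E1 = Z :&: W.
Proof.
by move=> sZ; rewrite -(gpW G) setIA -{1}(setIidPl sZ) -setIA [E2 :&: E1]setIC setIA.
Qed.

Lemma Z1E2 Z : Z \subset E1 -> Z :&: E2 = Z :&: W.
Proof. by move=> sZ; rewrite -(gpW G) setIA (setIidPl sZ). Qed.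

Definition Lset X :=
  cl M1 ((cl M1 (X :&: E1) :&: W) :|: (cl M2 (X :&: E2) :&: W)).

Lemma clM_formula X : X \subset E ->
  [/\ cl M X :&: E1 = cl M1 ((X :&: E1) :|: Lset X),
      cl M X :&: E2 = cl M2 ((X :&: E2) :|: Lset X),
      Lset X \subset W &
      cl M X :&: W = Lset X].
Proof.
move=> sX.
set L := Lset X; set X1 := X :&: E1; set X2 := X :&: E2.
set J1 := cl M1 X1 :&: W; set J2 := cl M2 X2 :&: W.
have sX1 : X1 \subset E1 := subsetIr _ _.
have sX2 : X2 \subset E2 := subsetIr _ _.
have sJ : J1 :|: J2 \subset W by rewrite subUset !subsetIr.
have sL : L \subset W := clW1 sJ.
have sLE1 := subset_trans sL sW1; have sLE2 := subset_trans sL sW2.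
have fL1 : flat M1 L := flat_cl (subset_trans sJ sW1).
have fL2 : flat M2 L := flatN sL fL1.
have L2 : L = cl M2 (J1 :|: J2) := clN sJ.
have J1L : J1 \subset L by apply: subset_trans (subsetUl _ _) (cl_sub (subset_trans sJ sW1)).
have J2L : J2 \subset L by apply: subset_trans (subsetUr _ _) (cl_sub (subset_trans sJ sW1)).
have sX1L : X1 :|: L \subset E1 by rewrite subUset sX1.
have sX2L : X2 :|: L \subset E2 by rewrite subUset sX2.
have a : cl M1 (X1 :|: L) :&: W = L.
  rewrite -cl_clU // (mod_cl (gpm1 G) (flat_cl sX1) sL) -/J1 (setUidPr J1L).
  exact: flat_clE.
have b : cl M2 (X2 :|: L) :&: W = L.
  rewrite -cl_clU // (mod_cl (gpm2 G) (flat_cl sX2) sL) -/J2 (setUidPr J2L).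
  exact: flat_clE.
set Z1 := cl M1 (X1 :|: L); set Z2 := cl M2 (X2 :|: L).
have Z1E : Z1 \subset E1 := cl_ground _ _.
have Z2E : Z2 \subset E2 := cl_ground _ _.
have LZ1 : L \subset Z1 := subset_trans (subsetUr _ _) (cl_sub sX1L).
have LZ2 : L \subset Z2 := subset_trans (subsetUr _ _) (cl_sub sX2L).
have eZ1 : (Z1 :|: Z2) :&: E1 = Z1.
  by rewrite setIUl (setIidPl Z1E) (Z2E1 Z2E) b (setUidPl LZ1).
have eZ2 : (Z1 :|: Z2) :&: E2 = Z2.
  by rewrite setIUl (setIidPl Z2E) (Z1E2 Z1E) a (setUidPr LZ2).
have sZ : Z1 :|: Z2 \subset E.
  by rewrite subUset (subset_trans Z1E sE1) (subset_trans Z2E sE2).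
have fZ : flat M (Z1 :|: Z2).
  by apply/(gpF G); rewrite eZ1 eZ2 sZ !flat_cl.
have XZ : X \subset Z1 :|: Z2.
  rewrite (set_split2 sX) -/X1 -/X2; apply: setUSS.
    exact: subset_trans (subsetUl _ _) (cl_sub sX1L).
  exact: subset_trans (subsetUl _ _) (cl_sub sX2L).
have clZ : cl M X = Z1 :|: Z2.
  apply/eqP; rewrite eqEsubset (cl_sub_flat fZ XZ) /=.
  set Y := cl M X.
  have fY : flat M Y := flat_cl sX.
  have fY1 := flat_flat1 fY; have fY2 := flat_flat2 fY.
  have XY : X \subset Y := cl_sub sX.
  have YW : Y :&: E1 :&: W = Y :&: E2 :&: W.
    by rewrite -!setIA (setIidPr sW1) (setIidPr sW2).
  have fYW : flat M1 (Y :&: E1 :&: W) := flatI fY1 fW1.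
  have LY : L \subset Y :&: E1 :&: W.
    apply: cl_sub_flat => //; rewrite subUset; apply/andP; split.
      by apply: setSI; apply: cl_sub_flat => //; apply: setSI.
    rewrite YW; apply: setSI; apply: cl_sub_flat => //; exact: setSI.
  have LY1 : L \subset Y :&: E1 := subset_trans LY (subsetIl _ _).
  have LY2 : L \subset Y :&: E2 by rewrite YW in LY; exact: subset_trans LY (subsetIl _ _).
  rewrite subUset; apply/andP; split.
    apply: subset_trans (subsetIl _ E1); apply: cl_sub_flat => //.
    by rewrite subUset LY1 andbT; apply: setSI.
  apply: subset_trans (subsetIl _ E2); apply: cl_sub_flat => //.
  by rewrite subUset LY2 andbT; apply: setSI.
rewrite clZ eZ1 eZ2; split => //.
by rewrite -(setIidPr sW1) setIA eZ1 a.
Qed.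


Lemma inW y : y \in E1 -> y \in E2 -> y \in W.
Proof. by move=> h1 h2; rewrite -(gpW G) inE h1 h2. Qed.

Lemma notcl_out B1 B2 x : indep M1 B1 -> B2 \subset E2 -> B1 :&: W \subset B2 ->
  cl M2 B2 :&: W \subset cl M1 (B1 :\ x) -> x \in B1 -> x \notin W ->
  x \notin cl M ((B1 :|: B2) :\ x).
Proof.
move=> iB1 sB2 hBW hcl xB1 xW.
have sB1 := indep_sub iB1.
set X := (B1 :|: B2) :\ x.
have sX : X \subset E.
  apply: subset_trans (subD1set _ _) _.
  by rewrite subUset (subset_trans sB1 sE1) (subset_trans sB2 sE2).
case: (clM_formula sX) => e1 _ sL _.
set C1 := cl M1 (B1 :\ x).
have sB1x : B1 :\ x \subset E1 := subset_trans (subD1set _ _) sB1.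
have fC1 : flat M1 C1 := flat_cl sB1x.
have X1s : X :&: E1 \subset C1.
  apply/subsetP => y; rewrite in_setI in_setD1 in_setU => /andP[/andP[nyx yB] yE1].
  case/orP: yB => [yB1|yB2].
    by apply: (subsetP (cl_sub sB1x)); rewrite in_setD1 nyx yB1.
  apply: (subsetP hcl); rewrite in_setI (inW yE1 (subsetP sB2 y yB2)) andbT.
  exact: (subsetP (cl_sub sB2)).
have X2s : X :&: E2 \subset B2.
  apply/subsetP => y; rewrite in_setI in_setD1 in_setU => /andP[/andP[nyx yB] yE2].
  case/orP: yB => [yB1|//].
  by apply: (subsetP hBW); rewrite in_setI yB1 (inW (subsetP sB1 y yB1) yE2).
have LC1 : Lset X \subset C1.
  apply: cl_sub_flat => //; rewrite subUset; apply/andP; split.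
    exact: subset_trans (subsetIl _ _) (cl_sub_flat fC1 X1s).
  apply: subset_trans hcl; apply: setSI; exact: clS.
apply/negP => xc.
have : x \in cl M X :&: E1 by rewrite in_setI xc (subsetP sB1 x xB1).
rewrite e1 => /(subsetP (cl_sub_flat fC1 _)).
rewrite subUset X1s LC1 => /(_ isT) xC.
move: iB1; rewrite (indep_clP sB1) => /forall_inP /(_ x xB1).
by rewrite xC.
Qed.

Lemma notcl_in B1 B2 x : indep M1 B1 -> indep M2 B2 -> B1 :&: W = B2 :&: W ->
  x \in B1 -> x \in W ->
  cl M1 (B1 :\ x) :&: W \subset cl M1 ((B1 :&: W) :\ x) ->
  cl M2 (B2 :\ x) :&: W \subset cl M2 ((B2 :&: W) :\ x) ->
  x \notin cl M ((B1 :|: B2) :\ x).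
Proof.
move=> iB1 iB2 eW xB1 xW h1 h2.
have sB1 := indep_sub iB1; have sB2 := indep_sub iB2.
set X := (B1 :|: B2) :\ x.
have sX : X \subset E.
  apply: subset_trans (subD1set _ _) _.
  by rewrite subUset (subset_trans sB1 sE1) (subset_trans sB2 sE2).
case: (clM_formula sX) => e1 _ sL _.
set C1 := cl M1 (B1 :\ x).
have sB1x : B1 :\ x \subset E1 := subset_trans (subD1set _ _) sB1.
have sB2x : B2 :\ x \subset E2 := subset_trans (subD1set _ _) sB2.
have fC1 : flat M1 C1 := flat_cl sB1x.
have X1s : X :&: E1 \subset B1 :\ x.
  apply/subsetP => y /setIP [/setD1P [nyx /setUP yB] yE1].
  rewrite in_setD1 nyx /=; case: yB => [//|yB2].
  have : y \in B2 :&: W by rewrite in_setI yB2 (inW yE1 (subsetP sB2 y yB2)).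
  by rewrite -eW in_setI => /andP[].
have X2s : X :&: E2 \subset B2 :\ x.
  apply/subsetP => y /setIP [/setD1P [nyx /setUP yB] yE2].
  rewrite in_setD1 nyx /=; case: yB => [yB1|//].
  have : y \in B1 :&: W by rewrite in_setI yB1 (inW (subsetP sB1 y yB1) yE2).
  by rewrite eW in_setI => /andP[].
have sB0x : (B1 :&: W) :\ x \subset W := subset_trans (subD1set _ _) (subsetIr _ _).
have fC0 : flat M1 (cl M1 ((B1 :&: W) :\ x)) := flat_cl (subset_trans sB0x sW1).
have LC0 : Lset X \subset cl M1 ((B1 :&: W) :\ x).
  apply: cl_sub_flat => //; rewrite subUset; apply/andP; split.
    apply: subset_trans h1; apply: setSI; exact: clS.
  rewrite (clN sB0x) eW; apply: subset_trans h2; apply: setSI; exact: clS.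
have LC1 : Lset X \subset C1.
  apply: subset_trans LC0 _; apply: clS; apply: setSD; exact: subsetIl.
apply/negP => xc.
have : x \in cl M X :&: E1 by rewrite in_setI xc (subsetP sB1 x xB1).
rewrite e1 => /(subsetP (cl_sub_flat fC1 _)).
rewrite subUset (subset_trans X1s (cl_sub sB1x)) LC1 => /(_ isT) xC.
move: iB1; rewrite (indep_clP sB1) => /forall_inP /(_ x xB1).
by rewrite xC.
Qed.

End GPsec.

Section GPsec2.
Variable T : finType.
Variables M1 M2 M : matroid T.
Variable W : {set T}.
Hypothesis G : GP M1 M2 M W.
Implicit Types X Y Z A B C D I L K F : {set T}.
Local Notation E1 := (ground M1).
Local Notation E2 := (ground M2).
Local Notation E := (ground M).

Lemma rk_formula Z : flat M Z ->
  rk M Z + rk M1 (Z :&: W) = rk M1 (Z :&: E1) + rk M2 (Z :&: E2).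
Proof.
move=> fZ; have sZ := flat_sub fZ.
have fZ1 := flat_flat1 G fZ; have fZ2 := flat_flat2 G fZ.
set Z1 := Z :&: E1; set Z2 := Z :&: E2; set ZW := Z :&: W.
have eZW1 : Z1 :&: W = ZW by rewrite -setIA (setIidPr (sW1 G)).
have eZW2 : Z2 :&: W = ZW by rewrite -setIA (setIidPr (sW2 G)).
have fZW : flat M1 ZW by rewrite -eZW1; exact: flatI fZ1 (fW1 G).
have sZW : ZW \subset W := subsetIr _ _.
case: (rk_extend (sub0set ZW) (indep0 M1)) => B0 [_ s0 i0 c0].
have s0W : B0 \subset W := subset_trans s0 sZW.
have s0Z1 : B0 \subset Z1 by rewrite -eZW1 in s0; exact: subset_trans s0 (subsetIl _ _).
have s0Z2 : B0 \subset Z2 by rewrite -eZW2 in s0; exact: subset_trans s0 (subsetIl _ _).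
case: (rk_extend s0Z1 i0) => B1 [s01 s1 i1 c1].
have i0' : indep M2 B0 by rewrite -(gpN G).
case: (rk_extend s0Z2 i0') => B2 [s02 s2 i2 c2].
have rZW2 : rk M2 ZW = #|B0| by rewrite -(rkN G sZW).
have t1 : B1 :&: W = B0 by apply: (basis_trace i1 s1 s01 s0W); rewrite eZW1.
have t2 : B2 :&: W = B0 by apply: (basis_trace i2 s2 s02 s0W); rewrite eZW2.
have cl1B1 : cl M1 B1 = Z1 := basis_cl fZ1 s1 i1 c1.
have cl2B2 : cl M2 B2 = Z2 := basis_cl fZ2 s2 i2 c2.
have cl1B0 : cl M1 B0 = ZW := basis_cl fZW s0 i0 c0.
have cl2B0 : cl M2 B0 = ZW by rewrite -(clN G s0W).
have sB1 := indep_sub i1; have sB2 := indep_sub i2.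
set B := B1 :|: B2.
have sB : B \subset E by rewrite subUset (subset_trans sB1 (sE1 G)) (subset_trans sB2 (sE2 G)).
have B0x : forall x, x \notin W -> forall B', B0 \subset B' -> B0 \subset B' :\ x.
  move=> x xW B' s; apply/subsetP => y yB0; rewrite in_setD1 (subsetP s y yB0) andbT.
  by apply: contraNneq xW => <-; exact: subsetP s0W y yB0.
have iB : indep M B.
  rewrite (indep_clP sB); apply/forall_inP => x xB.
  case xW: (x \in W).
    have xB0 : x \in B0.
      case/setUP: xB => [xB1|xB2].
        by rewrite -t1 in_setI xB1 xW.
      by rewrite -t2 in_setI xB2 xW.
    have xB1 := subsetP s01 x xB0.
    apply: (notcl_in G i1 i2 _ xB1 xW).
    - by rewrite t1 t2.
    - rewrite t1; apply: (mod_drop (gpm1 G) i1 s01 s0W) => //.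
      by rewrite cl1B1 eZW1 c0.
    - rewrite t2; apply: (mod_drop (gpm2 G) i2 s02 s0W) => //.
      by rewrite cl2B2 eZW2.
  case/setUP: xB => [xB1|xB2].
    apply: (notcl_out G i1 sB2 _ _ xB1 (negbT xW)).
      by rewrite t1.
    by rewrite cl2B2 eZW2 -cl1B0; apply: clS; apply: B0x => //; rewrite xW.
  rewrite /B setUC.
  apply: (notcl_out (GP_swap G) i2 sB1 _ _ xB2 (negbT xW)).
    by rewrite t2.
  by rewrite cl1B1 eZW1 -cl2B0; apply: clS; apply: B0x => //; rewrite xW.
have sBZ : B \subset Z.
  rewrite subUset (subset_trans s1 (subsetIl _ _)) /=.
  exact: subset_trans s2 (subsetIl _ _).
have rB : rk M Z = #|B|.
  apply/eqP; rewrite eqn_leq rk_max // andbT -(rk_indep iB) -(rk_cl sB).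
  apply: rk_mono; rewrite (set_split2 G sZ) subUset; apply/andP; split.
    apply/subsetP => z; rewrite -/Z1 -cl1B1 => zc.
    have zE1 : z \in E1 := subsetP (cl_ground _ _) z zc.
    rewrite -(cl1E G sB1 zE1) in zc.
    exact: subsetP (clS _ (subsetUl B1 B2)) z zc.
  apply/subsetP => z; rewrite -/Z2 -cl2B2 => zc.
  have zE2 : z \in E2 := subsetP (cl_ground _ _) z zc.
  rewrite -(cl1E (GP_swap G) sB2 zE2) in zc.
  exact: subsetP (clS _ (subsetUr B1 B2)) z zc.
have i12 : B1 :&: B2 = B0.
  have sW12 : B1 :&: B2 \subset W.
    apply/subsetP => y /setIP [y1 y2].
    exact: (inW G (subsetP sB1 y y1) (subsetP sB2 y y2)).
  by rewrite -(setIidPl sW12) setIAC t1; apply/setIidPl.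
have := cardsUI B1 B2; rewrite i12 => cU.
by rewrite rB -c0 -c1 -c2 -cU.
Qed.

End GPsec2.

Section GPsec3.
Variable T : finType.
Variables M1 M2 M : matroid T.
Variable W : {set T}.
Hypothesis G : GP M1 M2 M W.
Implicit Types X Y Z A B C D I L K F S : {set T}.
Local Notation E1 := (ground M1).
Local Notation E2 := (ground M2).
Local Notation E := (ground M).

Lemma fE1 : flat M E1.
Proof.
apply/(gpF G); rewrite setIid (gpW G) (sE1 G) flat_ground; split => //.
exact: fW2 G.
Qed.

Lemma fE2 : flat M E2.
Proof.
apply/(gpF G); rewrite setIid setIC (gpW G) (sE2 G) flat_ground; split => //.
exact: fW1 G.
Qed.

Lemma pg_side S : binary_pg_on M S -> (S \subset E1) || (S \subset E2).
Proof.
case=> r [g [gi gim gin]].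
have sS : S \subset E := pg_sub gim gin.
case/boolP: (S \subset E1) => //= /subsetPn [y yS yE1].
apply/negPn/negP => /subsetPn [x xS xE2].
have yE2 : y \in E2.
  by have := subsetP sS y yS; rewrite (gpE G) in_setU (negPf yE1).
have xE1 : x \in E1.
  by have := subsetP sS x xS; rewrite (gpE G) in_setU (negPf xE2) orbF.
have nxy : x != y by apply: contraNneq yE1 => <-.
have nz : (g x + g y)%R != 0%R.
  apply/negP => /eqP h; move/eqP: nxy; apply; apply: gi => //.
  by rewrite -[g x]addr0 -(F2_vv (g y)) addrA h add0r.
have : (g x + g y)%R \in g @: S by rewrite gim inE.
case/imsetP => z zS ez.
have sE := subsetP sS.
case zE1 : (z \in E1).
  have : y \in cl M [set x; z].
    apply: (pg_cl_rows gim gin) => //; first by rewrite subUset !sub1set xS zS.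
    have -> : g y = (g x + g z)%R by rewrite -ez addrA F2_vv add0r.
    by apply: addmx_sub; apply: row_in_rows; rewrite !inE eqxx ?orbT.
  move/(flatP (fE1) _) => /(_ _) h.
  by move: yE1; rewrite h // subUset !sub1set xE1 zE1.
have zE2 : z \in E2.
  by have := sE z zS; rewrite (gpE G) in_setU zE1.
have : x \in cl M [set y; z].
  apply: (pg_cl_rows gim gin) => //; first by rewrite subUset !sub1set yS zS.
  have -> : g x = (g y + g z)%R by rewrite -ez [(g x + _)%R]addrC addrA F2_vv add0r.
  by apply: addmx_sub; apply: row_in_rows; rewrite !inE eqxx ?orbT.
move/(flatP (fE2) _) => /(_ _) h.
by move: xE2; rewrite h // subUset !sub1set yE2 zE2.
Qed.



Lemma mod_lift S : S \subset E1 -> modular_flat M1 S -> modular_flat M S.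
Proof.
move=> sS [fS mS]; split; first exact: (flat1_flat G fS).
move=> F fF.
have sF := flat_sub fF.
have fF1 := flat_flat1 G fF; have fF2 := flat_flat2 G fF.
set F1 := F :&: E1; set F2 := F :&: E2; set FW := F :&: W.
set X := S :|: F.
have sX : X \subset E by rewrite subUset (subset_trans sS (sE1 G)) sF.
case: (clM_formula G sX) => e1 e2 sL eW.
have X1e : X :&: E1 = S :|: F1 by rewrite setIUl (setIidPl sS).
have SW : S :&: E2 = S :&: W := Z1E2 G sS.
have X2e : X :&: E2 = (S :&: W) :|: F2 by rewrite setIUl SW.
have sX1 : X :&: E1 \subset E1 := subsetIr _ _.
set J1 := cl M1 (X :&: E1) :&: W.
have fJ1 : flat M1 J1 := flatI (flat_cl sX1) (fW1 G).
have sJ1 : J1 \subset W := subsetIr _ _.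
have J1cl : J1 \subset cl M1 (X :&: E1) := subsetIl _ _.
have F2W : F2 :&: W = FW by rewrite -setIA (setIidPr (sW2 G)).
have FWJ1 : FW \subset J1.
  rewrite /J1 subsetI subsetIr andbT.
  apply: subset_trans (cl_sub sX1); rewrite X1e; apply: subset_trans (subsetUr S F1).
  by apply: setIS; exact: sW1 G.
have SWJ1 : S :&: W \subset J1.
  rewrite /J1 subsetI subsetIr andbT.
  apply: subset_trans (cl_sub sX1); rewrite X1e; exact: subset_trans (subsetIl _ _) (subsetUl _ _).
have sSW : S :&: W \subset W := subsetIr _ _.
have J2J1 : cl M2 (X :&: E2) :&: W \subset J1.
  rewrite X2e setUC (mod_cl (gpm2 G) fF2 sSW) F2W -(clN G); last by rewrite subUset sSW (subset_trans FWJ1 sJ1).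
  by apply: cl_sub_flat => //; rewrite subUset FWJ1 SWJ1.
have LJ1 : Lset M1 M2 W X = J1.
  by rewrite /Lset -/J1 (setUidPl J2J1) flat_clE.
rewrite LJ1 in e1 e2 eW.
have sY := flat_cl sX.
have h1 := rk_formula G sY.
rewrite e1 e2 eW rk_cl // in h1.
have sX1J : (X :&: E1) :|: J1 \subset E1 by rewrite subUset sX1 (subset_trans sJ1 (sW1 G)).
have sF2E : F2 \subset E2 := subsetIr _ _.
have sX2J : (X :&: E2) :|: J1 \subset E2 by rewrite subUset subsetIr (subset_trans sJ1 (sW2 G)).
rewrite !rk_cl // rk_cl_U // X1e in h1.
have e3 : X :&: E2 :|: J1 = F2 :|: J1.
  by rewrite X2e -setUA [F2 :|: J1]setUC setUA (setUidPr SWJ1) setUC.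
rewrite e3 in h1.
have h2 := mod_rk (gpm2 G) fF2 sJ1.
rewrite F2W (setUidPr FWJ1) -(rkN G sJ1) -(rkN G (subsetIr F W)) in h2.
have h3 := rk_formula G fF.
rewrite -/F1 -/F2 -/FW in h3.
have h4 := mS F1 fF1.
have eSF : S :&: F = S :&: F1 by rewrite /F1 setIA setIAC (setIidPl sS).
have sSF1 : S :&: F1 \subset E1 := subset_trans (subsetIl _ _) sS.
rewrite (rk1E G sS) eSF (rk1E G sSF1).
move: h1 h2 h3 h4; rewrite -/X -/F2 -/FW; slia.
Qed.


Lemma chord_side : chordal M1 -> forall C, circuit M C -> 3 < #|C| -> C \subset E1 ->
  exists (C1 C2 : {set T}) (e : T), [/\ circuit M C1, circuit M C2,
     C1 :&: C2 = [set e] & C = (C1 :|: C2) :\ e].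
Proof.
move=> ch C cC c4 sC; rewrite (circuit1E G sC) in cC.
case: (ch C cC c4) => C1 [C2 [e [c1 c2 i u]]].
exists C1, C2, e; split => //; rewrite (circuit1E G) //; exact: circuit_sub.
Qed.

End GPsec3.

Section GPsec4.
Variable T : finType.
Variables M1 M2 M : matroid T.
Variable W : {set T}.
Hypothesis G : GP M1 M2 M W.
Implicit Types X Y Z A B C D I L K F S : {set T}.
Local Notation E1 := (ground M1).
Local Notation E2 := (ground M2).
Local Notation E := (ground M).

Lemma gp_chordal : chordal M1 -> chordal M2 -> binary_pg_on M1 W -> chordal M.
Proof.
move=> ch1 ch2 [r [f [fi fim fin]]] C cC c4.
case/boolP: (C \subset E1) => [sC1|/subsetPn [q qC qE1]]; first exact: (chord_side G ch1 cC c4 sC1).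
case/boolP: (C \subset E2) => [sC2|/subsetPn [p pC pE2]].
  exact: (chord_side (GP_swap G) ch2 cC c4 sC2).
have sC := circuit_sub cC.
have qE2 : q \in E2 by have := subsetP sC q qC; rewrite (gpE G) in_setU (negPf qE1).
have pE1 : p \in E1 by have := subsetP sC p pC; rewrite (gpE G) in_setU (negPf pE2) orbF.
set P := C :\: E2; set Q := C :&: E2.
have sP1 : P \subset E1.
  apply/subsetP => y /setDP [yC yE2].
  by have := subsetP sC y yC; rewrite (gpE G) in_setU (negPf yE2) orbF.
have sQ2 : Q \subset E2 := subsetIr _ _.
have qP : q \notin P by rewrite inE qE2.
have pQ : p \notin Q by rewrite inE (negPf pE2) andbF.
have PC : P \subset C := subsetDl _ _.
have QC : Q \subset C := subsetIl _ _.
have nP : P != C by apply: contraNneq qP => ->.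
have nQ : Q != C by apply: contraNneq pQ => ->.
have iP := circuit_proper cC PC nP.
have iQ := circuit_proper cC QC nQ.
have iP1 : indep M1 P by rewrite -(ind1E G sP1).
have iQ2 : indep M2 Q by rewrite -(ind1E (GP_swap G) sQ2).
have qQ : q \in Q by rewrite inE qC qE2.
set J1 := cl M1 P :&: W; set J2 := cl M2 Q :&: W.
have sJ1 : J1 \subset W := subsetIr _ _.
have sJ2 : J2 \subset W := subsetIr _ _.
have qcl := circuit_cl cC qC.
set X := C :\ q.
have sX : X \subset E := subset_trans (subD1set _ _) sC.
case: (clM_formula G sX) => _ e2 sL _.
have X2e : X :&: E2 = Q :\ q.
  by apply/setP => y; rewrite !inE andbA.
have sQq : Q :\ q \subset E2 := subset_trans (subD1set _ _) sQ2.
have sQJ : (Q :\ q) :|: J1 \subset E2 by rewrite subUset sQq (subset_trans sJ1 (sW2 G)).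
set K := cl M2 ((Q :\ q) :|: J1).
have fK : flat M2 K := flat_cl sQJ.
have QqK : Q :\ q \subset K := subset_trans (subsetUl _ _) (cl_sub sQJ).
have J1K : J1 \subset K := subset_trans (subsetUr _ _) (cl_sub sQJ).
set CW := C :&: W.
have sCW : CW \subset W := subsetIr _ _.
have CWQ : CW \subset Q :\ q.
  apply/subsetP => y /setIP [yC yW]; rewrite !inE yC (subsetP (sW2 G) y yW) !andbT.
  by apply: contraNneq qE1 => <-; exact: subsetP (sW1 G) y yW.
have X1s : X :&: E1 \subset P :|: CW.
  apply/subsetP => y /setIP [/setD1P [nyq yC] yE1]; rewrite !inE yC /=.
  case yE2 : (y \in E2) => //=.
  by rewrite (inW G yE1 yE2).
have sPCW : P :|: CW \subset E1 by rewrite subUset sP1 (subset_trans sCW (sW1 G)).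
have J1'K : cl M1 (X :&: E1) :&: W \subset K.
  apply: subset_trans (_ : cl M1 (cl M1 P :|: CW) :&: W \subset K).
    by apply: setSI; rewrite cl_clU //; exact: clS.
  rewrite (mod_cl (gpm1 G) (flat_cl sP1) sCW) -/J1.
  have sJCW : J1 :|: CW \subset W by rewrite subUset sJ1 sCW.
  rewrite (clN G sJCW); apply: cl_sub_flat => //.
  by rewrite subUset J1K (subset_trans CWQ QqK).
have J2'K : cl M2 (X :&: E2) :&: W \subset K.
  by rewrite X2e; apply: subset_trans (subsetIl _ _) _; apply: clS; exact: subsetUl.
have LK : Lset M1 M2 W X \subset K.
  have sJJ : (cl M1 (X :&: E1) :&: W) :|: (cl M2 (X :&: E2) :&: W) \subset W.
    by rewrite subUset !subsetIr.
  rewrite /Lset (clN G sJJ); apply: cl_sub_flat => //.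
  by rewrite subUset J1'K J2'K.
have qK : q \in K.
  have : q \in cl M X :&: E2 by rewrite inE qcl qE2.
  rewrite e2 X2e => /(subsetP (cl_sub_flat fK _)); apply.
  by rewrite subUset QqK LK.
have h1 : rk M2 (Q :|: J1) <= rk M2 ((Q :\ q) :|: J1).
  move: qK; rewrite clE => /andP[_]; rewrite setUA setD1K //.
have h2 := rk_U M2 (Q :\ q) J1.
rewrite (rk_indep (indep_hered (subD1set _ _) iQ2)) in h2.
have cQ : #|Q| = #|Q :\ q|.+1 by rewrite (cardsD1 q Q) qQ.
have h3 := mod_rk (gpm2 G) (flat_cl sQ2) sJ1.
rewrite -/J2 rk_clU ?subUset ?sQ2 ?(subset_trans sJ1 (sW2 G)) // rk_cl // (rk_indep iQ2) in h3.
have sJ12 : J1 :|: J2 \subset W by rewrite subUset sJ1 sJ2.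
rewrite [J2 :|: J1]setUC -(rkN G sJ2) -(rkN G sJ12) in h3.
have lt : rk M1 (J1 :|: J2) < rk M1 J1 + rk M1 J2.
  rewrite -(rkN G sJ1) in h2.
  move: h1 h2 h3 cQ; slia.
case: (pg_skew fim fin sJ1 sJ2 lt) => e eW /andP[ec1 ec2].
have fJ1 : flat M1 J1 := flatI (flat_cl sP1) (fW1 G).
have fJ2' : flat M2 J2 := flatI (flat_cl sQ2) (fW2 G).
have fJ2 : flat M1 J2 := flatN (GP_swap G) sJ2 fJ2'.
have eJ1 : e \in J1 by rewrite -(flat_clE fJ1).
have eJ2 : e \in J2 by rewrite -(flat_clE fJ2).
have eE1 := subsetP (sW1 G) e eW; have eE2 := subsetP (sW2 G) e eW.
have eclP : e \in cl M P.
  by rewrite (cl1E G sP1 eE1); move: eJ1; rewrite inE => /andP[].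
have eclQ : e \in cl M Q.
  by rewrite (cl1E (GP_swap G) sQ2 eE2); move: eJ2; rewrite inE => /andP[].
have enC : e \notin C.
  apply/negP => eC.
  have ePn : e \notin P by rewrite inE eE2.
  have dep := cl_dep iP ePn eclP.
  have sPe : e |: P \subset C by rewrite subUset sub1set eC PC.
  have nPe : e |: P != C.
    apply/eqP => h; move: qC; rewrite -h in_setU1 (negPf qP) orbF => /eqP qe.
    by move: qE1; rewrite qe eE1.
  by move/negP: dep; apply; exact: circuit_proper cC sPe nPe.
have ie : indep M [set e].
  by rewrite (ind1E G) ?sub1set //; exact: (pg_ind1 fim fin eW).
have eU : P :|: Q = C by rewrite setUC setID.
have dI : P :&: Q = set0.
  by apply/setP => y; rewrite !inE; case: (y \in E2); rewrite /= ?andbF.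
exact: (chord cC eU dI nP nQ enC eclP eclQ ie).
Qed.

End GPsec4.

Lemma inv_all (T : finType) (M : matroid T) : gf2_chordal M ->
  chordal M /\ (forall S : {set T}, binary_pg_on M S -> modular_flat M S).
Proof.
elim => [M0 hb | M1 M2 M0 _ [ch1 iv1] _ [ch2 iv2] [Hg Hpg]].
  case: hb => r [f [fi fim fin]]; split.
    exact: (pgb_chordal fim fin).
  by move=> S; exact: (pgb_inv fi fim fin).
move: Hg; rewrite /is_gpc => -[hE hm hN hF].
set W := ground M1 :&: ground M2.
have pg2 : binary_pg_on M2 W.
  case: Hpg => r [f [fi fim fin]]; exists r, f; split => // X sX.
  by rewrite -hN // fin.
have G : GP M1 M2 M0 W := Build_GP hE erefl hm (iv2 _ pg2) hN hF.
split; first exact: (gp_chordal G ch1 ch2 Hpg).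
move=> S hS; case/orP: (pg_side G hS) => sS.
  apply: (mod_lift G sS); apply: iv1.
  case: hS => r [f [fi fim fin]]; exists r, f; split => // X sX.
  by rewrite -(ind1E G) ?fin // (subset_trans sX sS).
apply: (mod_lift (GP_swap G) sS); apply: iv2.
case: hS => r [f [fi fim fin]]; exists r, f; split => // X sX.
by rewrite -(ind1E (GP_swap G)) ?fin // (subset_trans sX sS).
Qed.

Theorem lemma3p9 (T : finType) (M : matroid T) :
  gf2_chordal M -> chordal M.
Proof. by move=> h; case: (inv_all h). Qed.
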